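(* Let $M$ be a simple triangular grid graph and let $g,g'$ be nodes of $M$. For $q\in\{x,y,z\}$ let $d_q:=d_{M,q}(g,g')$ and $$P_q:=\{v\in M : d_{M,q}(g,v)=\lceil d_q/2\rceil \text{ and } d_{M,q}(g',v)=\lfloor d_q/2\rfloor\}.$$ Then for each $q\in\{x,y,z\}$, $P_q$ is a $q$-portal of $M$, and every $gg'$-path in $M$ contains a node of $P_q$.
   Context: $G_\Delta$ is the infinite regular triangular grid graph; its edges are parallel to three axes: the $x$-axis (East–West), the $y$-axis (NNE–SSW) and the $z$-axis (NNW–SSE). A triangular grid graph is the subgraph of $G_\Delta$ induced by a finite node set such that it is connected; it is simple if the subgraph of $G_\Delta$ induced by the complement of its node set is connected (i.e. no inner holes). For a triangular grid graph $\Gamma=(V_\Gamma,E_\Gamma)$ and $E_x\subseteq E_\Gamma$ the edges parallel to the $x$-axis, the $x$-portals of $\Gamma$ are the connected components of $(V_\Gamma,E_x)$; $y$- and $z$-portals are defined analogously. $\operatorname{portal}_q(u)$ denotes the $q$-portal containing $u$. The $q$-portal graph $\mathcal P_q$ has a node for each $q$-portal, two portals being adjacent iff some edge of $\Gamma$ joins them. The $q$-distance $d_{\Gamma,q}(u,v)$ is the distance between $\operatorname{portal}_q(u)$ and $\operatorname{portal}_q(v)$ in $\mathcal P_q$. *)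

(* Defs.v *)
(* Nodes of the infinite triangular grid G_Delta are encoded
   in axial coordinates (a,b) : int * int, the node at a*e1 + b*e2 with
   e1 = (1,0) (East) and e2 = (1/2, sqrt 3/2) (NNE). *)
From mathcomp Require Import all_boot all_order all_algebra.
Set Implicit Arguments. Unset Strict Implicit. Unset Printing Implicit Defensive.
Import Order.TTheory GRing.Theory Num.Theory.
Local Open Scope ring_scope.

Definition node := (int * int)%type.

Inductive axis := AX | AY | AZ.

Definition adjq (q : axis) (u v : node) : bool :=
  match q with
  | AX => (u.2 == v.2) && ((v.1 - u.1 == 1) || (u.1 - v.1 == 1))       (* E-W *)
  | AY => (u.1 == v.1) && ((v.2 - u.2 == 1) || (u.2 - v.2 == 1))       (* NNE-SSW *)
  | AZ => ((v.1 - u.1 == -1) && (v.2 - u.2 == 1))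
          || ((v.1 - u.1 == 1) && (v.2 - u.2 == -1))                    (* NNW-SSE *)
  end.

Definition adj (u v : node) : bool := [|| adjq AX u v, adjq AY u v | adjq AZ u v].

Fixpoint ppath (T : Type) (R : T -> T -> Prop) (x : T) (s : seq T) : Prop :=
  match s with
  | [::] => True
  | y :: s' => R x y /\ ppath R y s'
  end.

Definition gpath (S : node -> Prop) (u : node) (s : seq node) (v : node) : Prop :=
  S u /\ ppath (fun a b => S a /\ S b /\ adj a b) u s /\ last u s = v.

Definition connected_set (S : node -> Prop) : Prop :=
  forall u v, S u -> S v -> exists s, gpath S u s v.

Definition tri_grid_graph (V : seq node) : Prop :=
  connected_set (fun u => u \in V).

Definition simple_tri_grid_graph (V : seq node) : Prop :=
  tri_grid_graph V /\ connected_set (fun u => u \notin V).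

(* w lies in portal_q(u) : connected component of (V, E_q) containing u *)
Definition portal (q : axis) (V : seq node) (u w : node) : Prop :=
  u \in V /\ w \in V /\
  exists s, ppath (fun a b => a \in V /\ b \in V /\ adjq q a b) u s /\ last u s = w.

Definition is_portal (q : axis) (V : seq node) (P : node -> Prop) : Prop :=
  exists u, u \in V /\ forall w, P w <-> portal q V u w.

Definition portal_adj (q : axis) (V : seq node) (a b : node) : Prop :=
  exists a' b', portal q V a a' /\ portal q V b b' /\ adj a' b'.

(* there is a walk of length k in P_q from portal_q(u) to portal_q(v)
   (portals represented by nodes) *)
Definition qwalk (q : axis) (V : seq node) (u v : node) (k : nat) : Prop :=
  exists s : seq node, size s = k /\ ppath (portal_adj q V) u s /\
    portal q V (last u s) v.

Definition qdist (q : axis) (V : seq node) (u v : node) (d : nat) : Prop :=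
  qwalk q V u v d /\ forall m, (m < d)%N -> ~ qwalk q V u v m.

(* Main.v *)
Require Import Defs.
From mathcomp Require Import all_boot all_order all_algebra zify.
From Stdlib Require Import Classical.
Set Implicit Arguments. Unset Strict Implicit. Unset Printing Implicit Defensive.
Import Order.TTheory GRing.Theory Num.Theory.
Local Open Scope ring_scope.

Definition rw (q : axis) (u : node) : int :=
  match q with AX => u.2 | AY => u.1 | AZ => u.1 + u.2 end.
Definition cl (q : axis) (u : node) : int :=
  match q with AX => u.1 | AY => u.2 | AZ => - u.1 end.
Definition mk (q : axis) (r c : int) : node :=
  match q with AX => (c, r) | AY => (r, c) | AZ => (- c, r + c) end.

Lemma rw_mk q r c : rw q (mk q r c) = r.
Proof. case: q => /=; lia. Qed.
Lemma cl_mk q r c : cl q (mk q r c) = c.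
Proof. case: q => /=; lia. Qed.
Lemma mk_rwcl q u : mk q (rw q u) (cl q u) = u.
Proof. case: u => a b; case: q => /=; congr pair; lia. Qed.
Lemma rwcl_inj q u v : rw q u = rw q v -> cl q u = cl q v -> u = v.
Proof. by move=> H1 H2; rewrite -(mk_rwcl q u) -(mk_rwcl q v) H1 H2. Qed.

Definition sadj (r c r' c' : int) : Prop :=
  (r' = r /\ (c' = c + 1 \/ c' = c - 1)) \/
  (r' = r + 1 /\ (c' = c \/ c' = c - 1)) \/
  (r' = r - 1 /\ (c' = c \/ c' = c + 1)).

Lemma adj_coord q u v : adj u v -> sadj (rw q u) (cl q u) (rw q v) (cl q v).
Proof.
case: u => a b; case: v => c d; rewrite /adj /adjq /sadj /=.
case: q => /=; lia.
Qed.

Lemma adjq_coord q u v : adjq q u v ->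
  rw q u = rw q v /\ (cl q v = cl q u + 1 \/ cl q v = cl q u - 1).
Proof. case: u => a b; case: v => c d; case: q; rewrite /adjq /=; lia. Qed.

Lemma adjq_adj q u v : adjq q u v -> adj u v.
Proof. case: u => a b; case: v => c d; case: q; rewrite /adj /adjq /=; lia. Qed.

Lemma adj_row q u v : adj u v -> rw q u = rw q v -> adjq q u v.
Proof. case: u => a b; case: v => c d; case: q; rewrite /adj /adjq /=; lia. Qed.

Lemma adj_sym u v : adj u v -> adj v u.
Proof. case: u => a b; case: v => c d; rewrite /adj /adjq /=; lia. Qed.

Lemma adjq_sym q u v : adjq q u v -> adjq q v u.
Proof. case: u => a b; case: v => c d; case: q; rewrite /adjq /=; lia. Qed.

Lemma mk_adjq q r c c' : (c' = c + 1 \/ c' = c - 1) -> adjq q (mk q r c) (mk q r c').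
Proof. case: q; rewrite /adjq /=; lia. Qed.

Lemma ppath_cat T (R : T -> T -> Prop) x s1 s2 :
  ppath R x (s1 ++ s2) <-> ppath R x s1 /\ ppath R (last x s1) s2.
Proof.
elim: s1 x => [|y s1 IH] x /=; first by tauto.
rewrite IH; tauto.
Qed.

Lemma ppath_mono T (R R' : T -> T -> Prop) x s :
  (forall a b, R a b -> R' a b) -> ppath R x s -> ppath R' x s.
Proof.
move=> H; elim: s x => [|y s IH] x //= [H1 H2]; split; auto.
Qed.

Lemma ppath_str (T : eqType) (R : T -> T -> Prop) (P : T -> Prop) x s :
  ppath R x s -> (forall z, z \in x :: s -> P z) ->
  ppath (fun a b => R a b /\ P a /\ P b) x s.
Proof.
elim: s x => [|y s IH] x //= [H1 H2] HP; split.
- split=> //; split; apply: HP; by rewrite !inE eqxx ?orbT.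
- apply: IH => // z Hz; apply: HP; by rewrite inE Hz orbT.
Qed.

Lemma ppath_rev (T : eqType) (R : T -> T -> Prop) x s :
  (forall a b, R a b -> R b a) -> ppath R x s ->
  exists t, ppath R (last x s) t /\ last (last x s) t = x /\
     (forall z, z \in last x s :: t -> z \in x :: s).
Proof.
move=> Rs; elim: s x => [|y s IH] x /=.
  by move=> _; exists [::]; split=> //; split.
move=> [H1 H2]; have [t [Ht1 [Ht2 Ht3]]] := IH y H2.
exists (rcons t x); split; last split.
- rewrite -cats1 ppath_cat /= Ht2; split=> //; split=> //; exact: Rs.
- by rewrite last_rcons.
- move=> z; rewrite -cats1 -cat_cons mem_cat => /orP [/Ht3 Hz|].
    by rewrite inE Hz orbT.
  by rewrite !inE => ->.
Qed.

Fixpoint wpar (f : node -> node -> bool) (x : node) (s : seq node) : bool :=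
  if s is y :: s' then f x y (+) wpar f y s' else false.

Lemma wpar_cat f x s1 s2 :
  wpar f x (s1 ++ s2) = wpar f x s1 (+) wpar f (last x s1) s2.
Proof. elim: s1 x => [|y s IH] x /=; first by []. by rewrite IH addbA. Qed.

Lemma wpar_ext (R : node -> node -> Prop) f g x s :
  ppath R x s -> (forall a b, R a b -> f a b = g a b) -> wpar f x s = wpar g x s.
Proof. move=> + H; elim: s x => [|y s IH] x //= [H1 H2]; by rewrite H // IH. Qed.

Lemma wpar_false (R : node -> node -> Prop) f x s :
  ppath R x s -> (forall a b, R a b -> f a b = false) -> wpar f x s = false.
Proof. move=> P H; rewrite (wpar_ext (g := fun _ _ => false) P H). by elim: s x {P} => //= y s IH x; rewrite IH. Qed.

Lemma wpar_xor f g x s :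
  wpar (fun a b => f a b (+) g a b) x s = wpar f x s (+) wpar g x s.
Proof.
elim: s x => [|y s IH] x //=; rewrite IH.
by case: (f x y); case: (g x y); case: (wpar f y s); case: (wpar g y s).
Qed.

Lemma wpar_bd (U : node -> bool) x s :
  wpar (fun a b => U a (+) U b) x s = U x (+) U (last x s).
Proof.
elim: s x => [|y s IH] x /=; first by rewrite addbb.
by rewrite IH addbA -(addbA (U x)) addbb addbF.
Qed.

Definition phi (R C ra ca rb cb : int) : bool :=
  ((ra == R) && (C < ca) && (rb == R + 1)) || ((rb == R) && (C < cb) && (ra == R + 1)).
Definition psi (R C ra ca rb cb : int) : bool :=
  ((ra == R) && (C < ca) && (rb == R - 1)) || ((rb == R) && (C < cb) && (ra == R - 1)).

Definition Phi q p a b := phi (rw q p) (cl q p) (rw q a) (cl q a) (rw q b) (cl q b).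
Definition Psi q p a b := psi (rw q p) (cl q p) (rw q a) (cl q a) (rw q b) (cl q b).

Lemma step_h R C C' ra ca rb cb : (C' = C + 1 \/ C' = C - 1) ->
  sadj ra ca rb cb -> ~ (ra = R /\ ca = C') -> ~ (rb = R /\ cb = C') ->
  ~ (ra = R /\ ca = C) -> ~ (rb = R /\ cb = C) ->
  phi R C ra ca rb cb = phi R C' ra ca rb cb.
Proof.
rewrite /phi /sadj => HC HS H1 H2 H3 H4.
case: HC => HC; case: HS => [[E1 [E2|E2]]|[[E1 [E2|E2]]|[E1 [E2|E2]]]]; subst; lia.
Qed.

Lemma step_u R C C' ra ca rb cb : (C' = C \/ C' = C - 1) ->
  sadj ra ca rb cb -> ~ (ra = R /\ ca = C) -> ~ (rb = R /\ cb = C) ->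
  ~ (ra = R + 1 /\ ca = C') -> ~ (rb = R + 1 /\ cb = C') ->
  phi R C ra ca rb cb = psi (R + 1) C' ra ca rb cb.
Proof.
rewrite /phi /psi /sadj => HC HS H1 H2 H3 H4.
case: HC => HC; case: HS => [[E1 [E2|E2]]|[[E1 [E2|E2]]|[E1 [E2|E2]]]]; subst; lia.
Qed.

Definition Hh (R rz : int) : bool := R < rz.
Definition Uu (R C rz cz : int) : bool := (R < rz) || ((rz == R) && (C < cz)).

Lemma step_pp R C ra ca rb cb :
  sadj ra ca rb cb -> ~ (ra = R /\ ca = C) -> ~ (rb = R /\ cb = C) ->
  phi R C ra ca rb cb (+) psi R C ra ca rb cb =
  (Hh R ra (+) Hh R rb) (+) (Uu R C ra ca (+) Uu R C rb cb).
Proof.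
rewrite /phi /psi /sadj /Hh /Uu => HS H1 H2.
case: HS => [[E1 [E2|E2]]|[[E1 [E2|E2]]|[E1 [E2|E2]]]]; subst; lia.
Qed.


Definition RW (M : seq node) (a b : node) : Prop := a \in M /\ b \in M /\ adj a b.

Lemma notp q (M : seq node) p a : p \notin M -> a \in M -> ~ (rw q a = rw q p /\ cl q a = cl q p).
Proof. move=> Hp Ha [H1 H2]; have E := rwcl_inj H1 H2; subst; by rewrite Ha in Hp. Qed.

Lemma Phi_Psi q M p x s : p \notin M -> ppath (RW M) x s -> last x s = x ->
  wpar (Phi q p) x s = wpar (Psi q p) x s.
Proof.
move=> Hp P L.
pose H := fun z => Hh (rw q p) (rw q z).
pose U := fun z => Uu (rw q p) (cl q p) (rw q z) (cl q z).
have E : wpar (fun a b => Phi q p a b (+) Psi q p a b) x s =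
  wpar (fun a b => (H a (+) H b) (+) (U a (+) U b)) x s.
  apply: (wpar_ext P) => a b [Ha [Hb Hab]].
  by apply: step_pp; [apply: adj_coord | apply: notp Hp Ha | apply: notp Hp Hb].
move: E; rewrite (wpar_xor (Phi q p)) (wpar_xor (fun a b => H a (+) H b)) (wpar_bd H) (wpar_bd U) L !addbb.
by case: (wpar (Phi q p) x s); case: (wpar (Psi q p) x s).
Qed.

Lemma Phi_step q M p p' x s : p \notin M -> p' \notin M -> adj p p' ->
  ppath (RW M) x s -> last x s = x ->
  wpar (Phi q p) x s = wpar (Phi q p') x s.
Proof.
move=> Hp Hp' Hpp P L.
have := adj_coord q Hpp; rewrite /sadj.
case=> [[Er Ec]|[[Er Ec]|[Er Ec]]].
- apply: (wpar_ext P) => a b [Ha [Hb Hab]].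
  rewrite /Phi Er; apply: step_h => //; first by apply: adj_coord.
  + by rewrite -Er; apply: notp Hp' Ha.
  + by rewrite -Er; apply: notp Hp' Hb.
  + by apply: notp Hp Ha.
  + by apply: notp Hp Hb.
- rewrite (Phi_Psi q Hp' P L).
  apply: (wpar_ext P) => a b [Ha [Hb Hab]].
  rewrite /Phi /Psi Er; apply: step_u => //; first by apply: adj_coord.
  + by apply: notp Hp Ha.
  + by apply: notp Hp Hb.
  + by rewrite -Er; apply: notp Hp' Ha.
  + by rewrite -Er; apply: notp Hp' Hb.
- rewrite (Phi_Psi q Hp P L).
  symmetry; apply: (wpar_ext P) => a b [Ha [Hb Hab]].
  have Er' : rw q p = rw q p' + 1 by lia.
  rewrite /Phi /Psi Er'; apply: step_u => //; first by lia.
  + by apply: adj_coord.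
  + by apply: notp Hp' Ha.
  + by apply: notp Hp' Hb.
  + by rewrite -Er'; apply: notp Hp Ha.
  + by rewrite -Er'; apply: notp Hp Hb.
Qed.

Fixpoint bnd q (s : seq node) : nat :=
  if s is z :: s' then (absz (cl q z) + bnd q s')%N else 0%N.

Lemma bnd_ge q s z : z \in s -> (absz (cl q z) <= bnd q s)%N.
Proof.
elim: s => [|y s IH] //=; rewrite inE => /orP [/eqP ->|/IH]; lia.
Qed.

Lemma bnd_notin q s z : (bnd q s < absz (cl q z))%N -> z \notin s.
Proof. move=> H; apply/negP => /(bnd_ge q); lia. Qed.

Lemma Phi_far q M x s : ppath (RW M) x s ->
  wpar (Phi q (mk q 0 (bnd q M).+1%:Z)) x s = false.
Proof.
move=> P; apply: (wpar_false P) => a b [Ha [Hb _]].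
have := bnd_ge q Ha; have := bnd_ge q Hb.
rewrite /Phi /phi rw_mk cl_mk; lia.
Qed.

Lemma jordan q M p x s : simple_tri_grid_graph M -> p \notin M ->
  ppath (RW M) x s -> last x s = x ->
  wpar (Phi q p) x s = false /\ wpar (Psi q p) x s = false.
Proof.
move=> [_ HC] Hp P L.
suff H : wpar (Phi q p) x s = false by split=> //; rewrite -(Phi_Psi q Hp P L).
set pf := mk q 0 (bnd q M).+1%:Z.
have Hpf : pf \notin M by apply: (@bnd_notin q M pf); rewrite /pf cl_mk; lia.
have [t [_ [Pt Lt]]] := HC p pf Hp Hpf.
rewrite -(Phi_far q P) -/pf -Lt.
elim: t p Hp Pt {Lt} => [|y t IH] p Hp //= [[H1 [H2 H3]] H4].
by rewrite (Phi_step q H1 H2 H3 P L); apply: IH.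
Qed.

Section Portal.
Variables (q : axis) (M : seq node).

Definition XR (a b : node) : Prop := a \in M /\ b \in M /\ adjq q a b.

Lemma portal_refl u : u \in M -> portal q M u u.
Proof. by move=> H; split=> //; split=> //; exists [::]. Qed.

Lemma portal_snoc u y z : portal q M u y -> adjq q y z -> z \in M -> portal q M u z.
Proof.
move=> [Hu [Hy [s [Ps Ls]]]] Hyz Hz; split=> //; split=> //.
exists (rcons s z); rewrite -cats1 ppath_cat last_cat /= Ls; split=> //.
Qed.

Lemma portal_trans u v w : portal q M u v -> portal q M v w -> portal q M u w.
Proof.
move=> [Hu [Hv [s [Ps Ls]]]] [_ [Hw [t [Pt Lt]]]]; split=> //; split=> //.
exists (s ++ t); rewrite ppath_cat last_cat Ls; by split.
Qed.

Lemma portal_sym u v : portal q M u v -> portal q M v u.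
Proof.
move=> [Hu [Hv [s [Ps Ls]]]].
have Rs : forall a b, (a \in M /\ b \in M /\ adjq q a b) -> (b \in M /\ a \in M /\ adjq q b a).
  by move=> a b [H1 [H2 H3]]; split=> //; split=> //; apply: adjq_sym.
have [t [Pt [Lt _]]] := ppath_rev Rs Ps.
split=> //; split=> //; exists t; by rewrite -Ls.
Qed.

Lemma portal_M u v : portal q M u v -> u \in M /\ v \in M.
Proof. by case=> [? [? _]]. Qed.

Lemma portal_row u v : portal q M u v -> rw q u = rw q v.
Proof.
move=> [_ [_ [s [Ps <-]]]]; elim: s u Ps => [|y s IH] u //= [[_ [_ /adjq_coord [H _]]] /IH].
by rewrite H.
Qed.

Lemma portal_side u v z : portal q M u v -> z \notin M -> rw q z = rw q u ->
  (cl q u < cl q z -> cl q v < cl q z) /\ (cl q z < cl q u -> cl q z < cl q v).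
Proof.
move=> [Hu [_ [s [Ps <-]]]] Hz; elim: s u Hu Ps => [|y s IH] u Hu //= [[_ [Hy Ha]] Ps] Er.
have [E1 E2] := adjq_coord Ha.
have Hn := notp (q:=q) Hz Hy.
have [IH1 IH2] := IH y Hy Ps (etrans Er E1).
split=> H; [apply: IH1 | apply: IH2]; lia.
Qed.

Lemma gap z (sg : int) : z \in M -> (sg = 1 \/ sg = -1) ->
  exists k : nat, mk q (rw q z) (cl q z + sg * k%:Z) \notin M /\
    forall j : nat, (j < k)%N -> portal q M z (mk q (rw q z) (cl q z + sg * j%:Z)).
Proof.
move=> Hz Hs.
have ex : exists k : nat, mk q (rw q z) (cl q z + sg * k%:Z) \notin M.
  exists (bnd q M + absz (cl q z)).+1; apply: (@bnd_notin q); rewrite cl_mk.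
  case: Hs => ->; lia.
case: (ex_minnP ex) => k Pk Hmin; exists k; split=> // j.
elim: j => [|j IH] Hj.
  have -> : mk q (rw q z) (cl q z + sg * 0%:Z) = z.
    by apply: (@rwcl_inj q); rewrite ?rw_mk ?cl_mk //; lia.
  exact: portal_refl.
have IH' := IH (ltnW Hj).
apply: (portal_snoc IH').
  apply: mk_adjq; case: Hs => ->; lia.
case E: (_ \in M) => //; have := Hmin _ (negbT E); lia.
Qed.

Lemma gapR z : z \in M -> exists R, R \notin M /\ rw q R = rw q z /\ cl q z < cl q R /\
  forall y, rw q y = rw q z -> cl q z <= cl q y < cl q R -> portal q M z y.
Proof.
move=> Hz; have [k [Hk Hj]] := gap (sg := 1) Hz (or_introl erefl).
have Hk0 : (0 < k)%N.
  case: k Hk Hj => // Hk _; move: Hk.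
  have -> : mk q (rw q z) (cl q z + 1 * 0%:Z) = z.
    by apply: (@rwcl_inj q); rewrite ?rw_mk ?cl_mk //; lia.
  by rewrite Hz.
exists (mk q (rw q z) (cl q z + 1 * k%:Z)); rewrite rw_mk cl_mk; split=> //; split=> //.
split; first lia.
move=> y Hy Hc.
have -> : y = mk q (rw q z) (cl q z + 1 * (absz (cl q y - cl q z))%:Z).
  by apply: (@rwcl_inj q); rewrite ?rw_mk ?cl_mk //; lia.
apply: Hj; lia.
Qed.

Lemma gapL z : z \in M -> exists L, L \notin M /\ rw q L = rw q z /\ cl q L < cl q z /\
  forall y, rw q y = rw q z -> cl q L < cl q y <= cl q z -> portal q M z y.
Proof.
move=> Hz; have [k [Hk Hj]] := gap (sg := -1) Hz (or_intror erefl).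
have Hk0 : (0 < k)%N.
  case: k Hk Hj => // Hk _; move: Hk.
  have -> : mk q (rw q z) (cl q z + -1 * 0%:Z) = z.
    by apply: (@rwcl_inj q); rewrite ?rw_mk ?cl_mk //; lia.
  by rewrite Hz.
exists (mk q (rw q z) (cl q z + -1 * k%:Z)); rewrite rw_mk cl_mk; split=> //; split=> //.
split; first lia.
move=> y Hy Hc.
have -> : y = mk q (rw q z) (cl q z + -1 * (absz (cl q z - cl q y))%:Z).
  by apply: (@rwcl_inj q); rewrite ?rw_mk ?cl_mk //; lia.
apply: Hj; lia.
Qed.

End Portal.

Lemma pi_A r cL cR ra ca rb cb : sadj ra ca rb cb ->
  (ra = r -> ca < cL \/ cR < ca) -> (rb = r -> cb < cL \/ cR < cb) -> cL < cR ->
  phi r cL ra ca rb cb = phi r cR ra ca rb cb.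
Proof.
rewrite /phi /sadj => HS H1 H2 H3.
case: HS => [[E1 [E2|E2]]|[[E1 [E2|E2]]|[E1 [E2|E2]]]]; subst; lia.
Qed.

Lemma pi_B r cL cR g ra ca rb cb : sadj ra ca rb cb ->
  (ra = r -> ca < cL \/ cR < ca) -> (rb = r -> cb < cL \/ cR < cb) -> cL < g -> g + 1 < cR ->
  psi (r + 1) g ra ca rb cb = phi r cR ra ca rb cb.
Proof.
rewrite /phi /psi /sadj => HS H1 H2 H3 H4.
case: HS => [[E1 [E2|E2]]|[[E1 [E2|E2]]|[E1 [E2|E2]]]]; subst; lia.
Qed.

Lemma pi_C r cL cR g ra ca rb cb : sadj ra ca rb cb ->
  (ra = r -> ca < cL \/ cR < ca) -> (rb = r -> cb < cL \/ cR < cb) -> cL < g - 1 -> g < cR ->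
  phi (r - 1) g ra ca rb cb = psi r cR ra ca rb cb.
Proof.
rewrite /phi /psi /sadj => HS H1 H2 H3 H4.
case: HS => [[E1 [E2|E2]]|[[E1 [E2|E2]]|[E1 [E2|E2]]]]; subst; lia.
Qed.

Lemma row_phi R C ra ca rb cb : ra = rb -> phi R C ra ca rb cb = false.
Proof. rewrite /phi => ->; lia. Qed.
Lemma row_psi R C ra ca rb cb : ra = rb -> psi R C ra ca rb cb = false.
Proof. rewrite /psi => ->; lia. Qed.

Lemma conn_A r cL cR c1 c2 ra ca rb cb : sadj ra ca r c1 -> sadj rb cb r c2 ->
  ra <> r -> rb <> r -> ra <> rb -> cL < c1 < cR -> cL < c2 < cR ->
  (phi r cL r c1 ra ca (+) phi r cR r c1 ra ca) (+)
  (phi r cL rb cb r c2 (+) phi r cR rb cb r c2) = true.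
Proof.
rewrite /phi /sadj => HA HB H1 H2 H3 H4 H5.
case: HA => [[E1 [E2|E2]]|[[E1 [E2|E2]]|[E1 [E2|E2]]]]; subst; try lia;
case: HB => [[E1 [E2|E2]]|[[E1 [E2|E2]]|[E1 [E2|E2]]]]; subst; lia.
Qed.

Lemma conn_B r cL cR c1 c2 g ca cb : sadj (r + 1) ca r c1 -> sadj (r + 1) cb r c2 ->
  (ca < g < cb \/ cb < g < ca) -> cL < c1 < cR -> cL < c2 < cR ->
  ((psi (r + 1) g r c1 (r + 1) ca (+) phi r cR r c1 (r + 1) ca) (+)
  (psi (r + 1) g (r + 1) cb r c2 (+) phi r cR (r + 1) cb r c2) = true)
  /\ cL < g /\ g + 1 < cR.
Proof.
rewrite /phi /psi /sadj => HA HB H1 H4 H5.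
case: HA => [[E1 [E2|E2]]|[[E1 [E2|E2]]|[E1 [E2|E2]]]]; try lia;
case: HB => [[E1' [E2'|E2']]|[[E1' [E2'|E2']]|[E1' [E2'|E2']]]]; try lia;
subst; lia.
Qed.

Lemma conn_C r cL cR c1 c2 g ca cb : sadj (r - 1) ca r c1 -> sadj (r - 1) cb r c2 ->
  (ca < g < cb \/ cb < g < ca) -> cL < c1 < cR -> cL < c2 < cR ->
  ((phi (r - 1) g r c1 (r - 1) ca (+) psi r cR r c1 (r - 1) ca) (+)
  (phi (r - 1) g (r - 1) cb r c2 (+) psi r cR (r - 1) cb r c2) = true)
  /\ cL < g - 1 /\ g < cR.
Proof.
rewrite /phi /psi /sadj => HA HB H1 H4 H5.
case: HA => [[E1 [E2|E2]]|[[E1 [E2|E2]]|[E1 [E2|E2]]]]; try lia;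
case: HB => [[E1' [E2'|E2']]|[[E1' [E2'|E2']]|[E1' [E2'|E2']]]]; try lia;
subst; lia.
Qed.

Lemma rows_pm ra ca r c : sadj ra ca r c -> ra <> r -> ra = r + 1 \/ ra = r - 1.
Proof. rewrite /sadj; lia. Qed.

Lemma good_arith (rz cz r rL cL rR cR : int) : rL = r -> rR = r ->
  ~ (rz = rL /\ cz = cL) -> ~ (rz = rR /\ cz = cR) -> (rz = r -> ~ (cL < cz < cR)) ->
  rz = r -> cz < cL \/ cR < cz.
Proof. lia. Qed.

Lemma pm_neq (r : int) : r + 1 <> r - 1.
Proof. lia. Qed.
Lemma mp_neq (r : int) : r - 1 <> r + 1.
Proof. lia. Qed.

Lemma ppath_RW_mem M u pi : u \in M -> ppath (RW M) u pi ->
  forall z, z \in u :: pi -> z \in M.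
Proof.
elim: pi u => [|y pi IH] u Hu /=.
  by move=> _ z; rewrite inE => /eqP ->.
rewrite /RW; move=> [[_ [Hy _]] P] z; rewrite inE => /orP [/eqP -> //|]. exact: (IH y Hy P).
Qed.

Lemma XR_RW q M x s : ppath (XR q M) x s -> ppath (RW M) x s.
Proof. apply: ppath_mono => a b [H1 [H2 H3]]; rewrite /RW; split=> //; split=> //; exact: (adjq_adj H3). Qed.

Lemma XR_row q M x s f : ppath (XR q M) x s ->
  (forall a b, rw q a = rw q b -> f a b = false) -> wpar f x s = false.
Proof. move=> P H; apply: (wpar_false P); rewrite /XR => a b [_ [_ /adjq_coord [E _]]]; exact: H. Qed.

Lemma between q M s t : s \in M -> t \in M -> rw q s = rw q t -> ~ portal q M s t ->
  exists G, G \notin M /\ rw q G = rw q s /\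
    ((cl q s < cl q G < cl q t) \/ (cl q t < cl q G < cl q s)).
Proof.
move=> Hs Ht Er N.
have Nc : cl q s != cl q t.
  apply/negP => /eqP Ec; apply: N; rewrite (rwcl_inj Er Ec); exact: portal_refl.
case: (ltgtP (cl q s) (cl q t)) Nc => // Hc _.
- have [G [HG [rG [cG Hin]]]] := gapR q Hs.
  exists G; split=> //; split=> //.
  have Hn := notp (q:=q) HG Ht.
  case: (ltP (cl q t) (cl q G)) => H; last lia.
  by case: N; apply: Hin; lia.
- have [G [HG [rG [cG Hin]]]] := gapR q Ht.
  exists G; split=> //; split; first lia.
  have Hn := notp (q:=q) HG Hs.
  case: (ltP (cl q s) (cl q G)) => H; last lia.
  by case: N; apply: portal_sym; apply: Hin; lia.
Qed.

Lemma sep q M p0 a' p1 b' p2 u w pi :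
  simple_tri_grid_graph M -> p0 \in M ->
  portal q M p0 p1 -> portal q M p0 p2 ->
  ~ portal q M p0 a' -> ~ portal q M p0 b' -> ~ portal q M a' b' ->
  adj a' p1 -> adj b' p2 ->
  portal q M a' u -> portal q M w b' ->
  ppath (RW M) u pi -> last u pi = w ->
  (forall z, z \in u :: pi -> ~ portal q M p0 z) -> False.
Proof.
move=> HS Hp0 H01 H02 Na Nb Nab Ha1 Hb2 Hau Hwb Ppi Lpi Npi.
have [L [HL [rL [cLlt HLin]]]] := gapL q Hp0.
have [R [HR [rR [cRgt HRin]]]] := gapR q Hp0.
have Hin : forall y, rw q y = rw q p0 -> cl q L < cl q y < cl q R -> portal q M p0 y.
  move=> y Hy Hc; case: (lerP (cl q y) (cl q p0)) => Hc'.
    by apply: HLin; lia.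
  by apply: HRin; lia.
have Hrange : forall y, portal q M p0 y -> rw q y = rw q p0 /\ cl q L < cl q y < cl q R.
  move=> y Hy; have Er := portal_row Hy; split=> //.
  have [S1 _] := portal_side Hy HR rR.
  have [_ S2] := portal_side Hy HL rL.
  have := S1 cRgt; have := S2 cLlt; lia.
have [Ma' Mu] := portal_M Hau.
have [Mw Mb'] := portal_M Hwb.
have [_ Mp1] := portal_M H01.
have [_ Mp2] := portal_M H02.
have [E1 c1] := Hrange p1 H01.
have [E2 c2] := Hrange p2 H02.
have Ra : rw q a' <> rw q p0.
  move=> E; apply: Na; apply: (portal_trans H01); apply: (portal_snoc (portal_refl q Mp1)) => //.
  by apply: adj_row; [apply: adj_sym | rewrite E E1].
have Rb : rw q b' <> rw q p0.
  move=> E; apply: Nb; apply: (portal_trans H02); apply: (portal_snoc (portal_refl q Mp2)) => //.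
  by apply: adj_row; [apply: adj_sym | rewrite E E2].
have Sa := adj_coord q Ha1.
have Sb := adj_coord q Hb2.
have Hgood : forall z, z \in u :: pi ->
    z \in M /\ (rw q z = rw q p0 -> cl q z < cl q L \/ cl q R < cl q z).
  move=> z Hz; have Mz := ppath_RW_mem Mu Ppi Hz; split=> //.
  apply: (good_arith rL rR (notp (q:=q) HL Mz) (notp (q:=q) HR Mz)).
  by move=> E H; apply: (Npi z Hz); apply: Hin.
have Ppi' := ppath_str Ppi Hgood.
have [_ [_ [sA [PA LA]]]] := Hau.
have [_ [_ [sB [PB LB]]]] := Hwb.
have [_ [_ [sP [PP LP]]]] := portal_trans (portal_sym H02) H01.
set s := a' :: sA ++ pi ++ sB ++ p2 :: sP.
have Hs : ppath (RW M) p1 s.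
  rewrite /s /=; split.
    split=> //; split=> //; exact: adj_sym.
  rewrite !ppath_cat LA Lpi LB /=; split; first exact: XR_RW PA.
  split=> //; split; first exact: XR_RW PB.
  split; last exact: XR_RW PP.
  by split=> //; split.
have Ls : last p1 s = p1 by rewrite /s /= !last_cat LA Lpi LB /= LP.
have Hsplit : forall f, (forall a b, rw q a = rw q b -> f a b = false) ->
    wpar f p1 s = f p1 a' (+) wpar f u pi (+) f b' p2.
  move=> f Hf; rewrite /s /= !wpar_cat LA Lpi LB /=.
  rewrite (XR_row PA Hf) (XR_row PB Hf) (XR_row PP Hf).
  by case: (f p1 a'); case: (wpar f u pi); case: (f b' p2).
have Hj := fun p (Hp : p \notin M) => jordan q HS Hp Hs Ls.
have rowPhi : forall X a b, rw q a = rw q b -> Phi q X a b = false.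
  by move=> X a b E; apply: row_phi.
have rowPsi : forall X a b, rw q a = rw q b -> Psi q X a b = false.
  by move=> X a b E; apply: row_psi.
rewrite E1 in Sa; rewrite E2 in Sb.
have [ra|ra] := rows_pm Sa Ra; have [rb|rb] := rows_pm Sb Rb.
-
  have [G [HG [rG cG]]] := between Ma' Mb' (etrans ra (esym rb)) Nab.
  rewrite ra in Sa; rewrite rb in Sb.
  have [Hc [g1 g2]] := conn_B Sa Sb cG c1 c2.
  pose f := fun a b => Psi q G a b (+) Phi q R a b.
  have Hf : forall a b, rw q a = rw q b -> f a b = false.
    by move=> a b E; rewrite /f rowPhi // rowPsi.
  have J : wpar f p1 s = false by rewrite wpar_xor (Hj _ HG).2 (Hj _ HR).1.
  have P0 : wpar f u pi = false.
    apply: (wpar_false Ppi') => a b [[_ [_ Hab]] [[_ Ga] [_ Gb]]].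
    rewrite /f /Psi /Phi rG ra rR (pi_B (cL := cl q L) (cR := cl q R)) ?addbb //.
    exact: adj_coord.
  move: (Hsplit f Hf); rewrite J P0 addbF /f /Psi /Phi rG ra rR E1 E2 rb.
  by move=> H; have := etrans H Hc.
-
  pose f := fun a b => Phi q L a b (+) Phi q R a b.
  have Hf : forall a b, rw q a = rw q b -> f a b = false.
    by move=> a b E; rewrite /f !rowPhi.
  have J : wpar f p1 s = false by rewrite wpar_xor (Hj _ HL).1 (Hj _ HR).1.
  have P0 : wpar f u pi = false.
    apply: (wpar_false Ppi') => a b [[_ [_ Hab]] [[_ Ga] [_ Gb]]].
    rewrite /f /Phi rL rR (pi_A (cL := cl q L) (cR := cl q R)) ?addbb //; last exact: (lt_trans cLlt cRgt).
    exact: adj_coord.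
  have Nrab : rw q a' <> rw q b' by rewrite ra rb; apply: pm_neq.
  have Hc := conn_A Sa Sb Ra Rb Nrab c1 c2.
  move: (Hsplit f Hf); rewrite J P0 addbF /f /Phi rL rR E1 E2.
  by move=> H; have := etrans H Hc.
-
  pose f := fun a b => Phi q L a b (+) Phi q R a b.
  have Hf : forall a b, rw q a = rw q b -> f a b = false.
    by move=> a b E; rewrite /f !rowPhi.
  have J : wpar f p1 s = false by rewrite wpar_xor (Hj _ HL).1 (Hj _ HR).1.
  have P0 : wpar f u pi = false.
    apply: (wpar_false Ppi') => a b [[_ [_ Hab]] [[_ Ga] [_ Gb]]].
    rewrite /f /Phi rL rR (pi_A (cL := cl q L) (cR := cl q R)) ?addbb //; last exact: (lt_trans cLlt cRgt).
    exact: adj_coord.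
  have Nrab : rw q a' <> rw q b' by rewrite ra rb; apply: mp_neq.
  have Hc := conn_A Sa Sb Ra Rb Nrab c1 c2.
  move: (Hsplit f Hf); rewrite J P0 addbF /f /Phi rL rR E1 E2.
  by move=> H; have := etrans H Hc.
-
  have [G [HG [rG cG]]] := between Ma' Mb' (etrans ra (esym rb)) Nab.
  rewrite ra in Sa; rewrite rb in Sb.
  have [Hc [g1 g2]] := conn_C Sa Sb cG c1 c2.
  pose f := fun a b => Phi q G a b (+) Psi q R a b.
  have Hf : forall a b, rw q a = rw q b -> f a b = false.
    by move=> a b E; rewrite /f rowPhi // rowPsi.
  have J : wpar f p1 s = false by rewrite wpar_xor (Hj _ HG).1 (Hj _ HR).2.
  have P0 : wpar f u pi = false.
    apply: (wpar_false Ppi') => a b [[_ [_ Hab]] [[_ Ga] [_ Gb]]].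
    rewrite /f /Psi /Phi rG ra rR (pi_C (cL := cl q L) (cR := cl q R)) ?addbb //.
    exact: adj_coord.
  move: (Hsplit f Hf); rewrite J P0 addbF /f /Psi /Phi rG ra rR E1 E2 rb.
  by move=> H; have := etrans H Hc.
Qed.

Close Scope ring_scope.

Section Walks.
Variables (q : axis) (M : seq node).
Local Notation padj := (portal_adj q M).
Local Notation portal := (portal q M).
Local Notation qwalk := (qwalk q M).

Lemma padj_M a b : padj a b -> a \in M /\ b \in M.
Proof. by move=> [a' [b' [[Ha _] [[Hb _] _]]]]. Qed.

Lemma padj_sym a b : padj a b -> padj b a.
Proof. move=> [a' [b' [H1 [H2 H3]]]]; exists b', a'; split=> //; split=> //; exact: adj_sym. Qed.

Lemma padj_l a b a2 : padj a b -> portal a a2 -> padj a2 b.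
Proof.
move=> [a' [b' [H1 [H2 H3]]]] H; exists a', b'; split=> //.
exact: portal_trans (portal_sym H) H1.
Qed.

Lemma padj_r a b b2 : padj a b -> portal b b2 -> padj a b2.
Proof.
move=> [a' [b' [H1 [H2 H3]]]] H; exists a', b'; split=> //; split=> //.
exact: portal_trans (portal_sym H) H2.
Qed.

Lemma ppath_head v v2 s : ppath padj v s -> portal v v2 -> ppath padj v2 s.
Proof. case: s => [|y s] //= [H1 H2] H; split=> //; exact: padj_l H1 H. Qed.

Lemma padj_last x s : x \in M -> ppath padj x s -> last x s \in M.
Proof. elim: s x => [|y s IH] x //= Hx [/padj_M [_ Hy] P]; exact: IH. Qed.

Lemma qwalk_trans u v w k l : qwalk u v k -> qwalk v w l -> qwalk u w (k + l).
Proof.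
move=> [s1 [sz1 [P1 L1]]] [s2 [sz2 [P2 L2]]].
exists (s1 ++ s2); rewrite size_cat sz1 sz2; split=> //; split.
  rewrite ppath_cat; split=> //; exact: ppath_head P2 (portal_sym L1).
rewrite last_cat; case: s2 {sz2} P2 L2 => [|y s2] /= P2 L2.
  exact: portal_trans L1 L2.
exact: L2.
Qed.

Lemma qwalk0 u v : portal u v -> qwalk u v 0.
Proof. by move=> H; exists [::]. Qed.

Lemma qwalk1 u v : padj u v -> qwalk u v 1.
Proof.
move=> H; exists [:: v]; split=> //=; split=> //; apply: portal_refl; exact: (padj_M H).2.
Qed.

Lemma qwalk_sym u v k : qwalk u v k -> qwalk v u k.
Proof.
move=> [s [<- [P L]]]; elim: s u P L => [|y s IH] u /= P L.
  exact: qwalk0 (portal_sym L).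
case: P => [H P]; have := qwalk_trans (IH y P L) (qwalk1 (padj_sym H)).
by rewrite addn1.
Qed.

Lemma qwalk_M u v k : qwalk u v k -> u \in M /\ v \in M.
Proof.
move=> [[|y s] [_ [P L]]]; first exact: portal_M L.
split; first exact: (padj_M P.1).1.
exact: (portal_M L).2.
Qed.

Lemma qwalk_pre g s1 s2 : g \in M -> ppath padj g (s1 ++ s2) ->
  qwalk g (last g s1) (size s1).
Proof.
move=> Hg; rewrite ppath_cat => [[P1 _]]; exists s1; split=> //; split=> //.
by apply: portal_refl; apply: padj_last.
Qed.

Lemma qwalk_suf g g' s1 s2 : ppath padj g (s1 ++ s2) -> portal (last g (s1 ++ s2)) g' ->
  qwalk (last g s1) g' (size s2).
Proof.
rewrite ppath_cat last_cat => [[_ P2]] L; exists s2; by split.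
Qed.

Lemma qwalk_portal u v u2 v2 k : qwalk u v k -> portal u u2 -> portal v v2 -> qwalk u2 v2 k.
Proof.
move=> H H1 H2; have := qwalk_trans (qwalk_trans (qwalk0 (portal_sym H1)) H) (qwalk0 H2).
by rewrite add0n addn0.
Qed.

Lemma walk_cat u v w s1 s2 : ppath padj u s1 -> portal (last u s1) v ->
  ppath padj v s2 -> portal (last v s2) w ->
  ppath padj u (s1 ++ s2) /\ portal (last u (s1 ++ s2)) w.
Proof.
move=> P1 L1 P2 L2; split.
  rewrite ppath_cat; split=> //; exact: ppath_head P2 (portal_sym L1).
rewrite last_cat; case: s2 P2 L2 => [|y s2] /= P2 L2.
  exact: portal_trans L1 L2.
exact: L2.
Qed.

End Walks.

Section GP.
Variables (q : axis) (M : seq node).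
Local Notation padj := (portal_adj q M).
Local Notation portal := (portal q M).
Local Notation qwalk := (qwalk q M).
Local Notation S := (fun u : node => u \in M).
Local Notation GP := (gpath (fun u : node => u \in M)).

Lemma mem_cat_cons (z u : node) s1 s2 : z \in u :: (s1 ++ s2) -> z \in u :: s1 \/ z \in s2.
Proof. by rewrite -cat_cons mem_cat => /orP. Qed.

Lemma gpath_cat u v w s1 s2 : GP u s1 v -> GP v s2 w -> GP u (s1 ++ s2) w.
Proof.
move=> [Hu [P1 L1]] [Hv [P2 L2]]; split=> //; split.
  by rewrite ppath_cat L1.
by rewrite last_cat L1.
Qed.

Lemma gpath_cons u v w s : u \in M -> adj u v -> GP v s w -> GP u (v :: s) w.
Proof. by move=> Hu Ha [Hv [P L]]; split=> //; split. Qed.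

Lemma xpath_portal u s : u \in M -> ppath (fun a b => a \in M /\ b \in M /\ adjq q a b) u s ->
  forall z, z \in u :: s -> portal u z.
Proof.
elim: s u => [|y s IH] u Hu /=.
  by move=> _ z; rewrite inE => /eqP ->; apply: portal_refl.
move=> [[_ [Hy Ha]] P] z; rewrite inE => /orP [/eqP ->|Hz]; first exact: portal_refl.
apply: (portal_trans (v := y)); last exact: IH.
exact: portal_snoc (portal_refl q Hu) Ha Hy.
Qed.

Lemma portal_path u w : portal u w ->
  exists s, GP u s w /\ forall z, z \in u :: s -> portal u z.
Proof.
move=> [Hu [Hw [s [P L]]]]; exists s; split.
  split=> //; split=> //; apply: (ppath_mono _ P) => a b [H1 [H2 H3]].
  by split=> //; split=> //; apply: adjq_adj H3.
exact: xpath_portal.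
Qed.

Lemma gp_last u s : u \in M -> ppath (fun a b => a \in M /\ b \in M /\ adj a b) u s -> last u s \in M.
Proof. elim: s u => [|y s IH] u //= Hu [[_ [Hy _]] P]; exact: IH. Qed.

Lemma gpath_rev u s v : GP u s v -> exists s', GP v s' u /\ forall z, z \in v :: s' -> z \in u :: s.
Proof.
move=> [Hu [P L]].
have Rs : forall a b, (a \in M /\ b \in M /\ adj a b) -> (b \in M /\ a \in M /\ adj b a).
  by move=> a b [H1 [H2 H3]]; split=> //; split=> //; apply: adj_sym.
have [t [Pt [Lt Mt]]] := ppath_rev Rs P.
exists t; rewrite -L; split=> //; split=> //; exact: gp_last.
Qed.

Lemma realize a t : a \in M -> ppath padj a t ->
  exists s, GP a s (last a t) /\
    forall z, z \in a :: s -> exists t1 t2, t = t1 ++ t2 /\ portal (last a t1) z.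
Proof.
elim: t a => [|y t IH] a Ha /=.
  move=> _; exists [::]; split; first by split.
  move=> z; rewrite inE => /eqP ->; exists [::], [::]; split=> //; exact: portal_refl.
move=> [[a' [y' [Ha' [Hy' Hadj]]]] P].
have [Hy _] := padj_M (padj_sym (ex_intro _ a' (ex_intro _ y' (conj Ha' (conj Hy' Hadj))))).
have [s1 [G1 M1]] := portal_path Ha'.
have [s2 [G2 M2]] := portal_path (portal_sym Hy').
have [s3 [G3 M3]] := IH y Hy P.
have Ma' := (portal_M Ha').2.
have G : GP a (s1 ++ y' :: (s2 ++ s3)) (last y t).
  apply: (gpath_cat G1); apply: gpath_cons => //.
  exact: gpath_cat G2 G3.
exists (s1 ++ y' :: (s2 ++ s3)); split=> // z Hz.
case: (mem_cat_cons Hz) => [/M1 Hz1|].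
  by exists [::], (y :: t); split.
move/mem_cat_cons; case=> [/M2 Hz2|Hz3].
  exists [:: y], t; split=> //=.
  exact: portal_trans Hy' Hz2.
have Hz3' : z \in y :: s3 by rewrite inE Hz3 orbT.
have [t1 [t2 [E Hp]]] := M3 z Hz3'.
exists (y :: t1), t2; split; first by rewrite E.
exact: Hp.
Qed.

End GP.

Lemma hit q M g g' d s s1 s2 pi :
  simple_tri_grid_graph M -> g \in M -> qdist q M g g' d -> size s = d ->
  ppath (portal_adj q M) g s -> portal q M (last g s) g' -> s = s1 ++ s2 ->
  gpath (fun u => u \in M) g pi g' ->
  exists2 z, z \in g :: pi & portal q M (last g s1) z.
Proof.
move=> HS Hg [Hd Hmin] Hsz P L E Gpi.
have bad : forall y k j, qwalk q M g y k -> qwalk q M y g' j -> (k + j < d)%N -> False.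
  move=> y k j H1 H2 H3; exact: (Hmin _ H3 (qwalk_trans H1 H2)).
subst s.
case: (lastP s1) P L Hsz => [|s1' x] P L Hsz.
  by exists g; [rewrite inE eqxx | exact: portal_refl].
case: s2 P L Hsz => [|y s2'] P L Hsz.
  exists g'; first by case: Gpi => [_ [_ <-]]; apply: mem_last.
  by move: L; rewrite cats0.
rewrite last_rcons.
case: (classic (exists2 z, z \in g :: pi & portal q M x z)) => // Hno; exfalso.
have Hav : forall z, z \in g :: pi -> ~ portal q M x z.
  by move=> z Hz Hp; apply: Hno; exists z.
have Wpre_x := qwalk_pre Hg P; rewrite last_rcons size_rcons in Wpre_x.
have Wx_suf := qwalk_suf P L; rewrite last_rcons /= in Wx_suf.
move: P L Hsz; rewrite cat_rcons => P L Hsz.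
have Wxm := qwalk_pre Hg P.
set xm := last g s1' in Wxm.
move: (P); rewrite ppath_cat => [[P1 /= [Hxmx [Hxy Py]]]].
move: L; rewrite last_cat /= => L.
have Wy_suf : qwalk q M y g' (size s2') by exists s2'.
rewrite size_cat /= in Hsz.
have [Hx My] := padj_M Hxy.
case: Hxmx => [a'' [p1 [Ha'' [Hp1 Had]]]].
case: Hxy => [p2 [b'' [Hp2 [Hb'' Hbd]]]].
have [sP [GP MP]] := realize Hg P1.
have [sP' [GP' MP']] := gpath_rev GP.
have [sS [GS MS]] := realize My Py.
have [sE [GE ME]] := portal_path L.
have [sS' [GS' MS']] := gpath_rev (gpath_cat GS GE).
have Gall := gpath_cat GP' (gpath_cat Gpi GS').
case: Gall => [_ [Pall Lall]].
apply: (sep HS Hx Hp1 Hp2 _ _ _ Had (adj_sym Hbd) (portal_sym Ha'') Hb'' Pall Lall).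
- move=> H; apply: (bad x (size s1') (size s2').+1) => //.
    exact: qwalk_portal Wxm (portal_refl q Hg) (portal_trans Ha'' (portal_sym H)).
  rewrite -Hsz; lia.
- move=> H; apply: (bad y (size s1').+1 (size s2')) => //.
    exact: qwalk_portal Wpre_x (portal_refl q Hg) (portal_trans H (portal_sym Hb'')).
  rewrite -Hsz; lia.
- move=> H; apply: (bad y (size s1') (size s2')) => //.
    apply: qwalk_portal Wxm (portal_refl q Hg) _.
    exact: portal_trans Ha'' (portal_trans H (portal_sym Hb'')).
  rewrite -Hsz; lia.
- move=> z Hz Hxz; case: (mem_cat_cons Hz) => [Hz1|].
    have [t1 [t2 [Et Hpt]]] := MP z (MP' z Hz1).
    have P12 : ppath (portal_adj q M) g (t1 ++ t2) by rewrite -Et.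
    have Wt := qwalk_pre Hg P12.
    apply: (bad x (size t1) (size s2').+1) => //.
      exact: qwalk_portal Wt (portal_refl q Hg) (portal_trans Hpt (portal_sym Hxz)).
    have : size s1' = (size t1 + size t2)%N by rewrite Et size_cat.
    rewrite -Hsz; lia.
  rewrite mem_cat => /orP [Hzpi|HzS].
    by apply: (Hav z) => //; rewrite inE Hzpi orbT.
  have HzS' : z \in g' :: sS' by rewrite inE HzS orbT.
  case: (mem_cat_cons (MS' z HzS')) => [Hz3|Hz4].
    have [t1 [t2 [Et Hpt]]] := MS z Hz3.
    have P12 : ppath (portal_adj q M) y (t1 ++ t2) by rewrite -Et.
    have L12 : portal q M (last y (t1 ++ t2)) g' by rewrite -Et.
    have Wt := qwalk_suf P12 L12.
    apply: (bad (last y t1) (size s1').+1 (size t2)) => //.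
      exact: qwalk_portal Wpre_x (portal_refl q Hg) (portal_trans Hxz (portal_sym Hpt)).
    have : size s2' = (size t1 + size t2)%N by rewrite Et size_cat.
    rewrite -Hsz; lia.
  have Hz5 : z \in last y s2' :: sE by rewrite inE Hz4 orbT.
  have Hpt := ME z Hz5.
  apply: (bad (last y s2') (size s1').+1 0) => //.
    exact: qwalk_portal Wpre_x (portal_refl q Hg) (portal_trans Hxz (portal_sym Hpt)).
    exact: qwalk0 L.
  rewrite -Hsz; lia.
Qed.

Theorem mainTheorem3 (M : seq node) (g g' : node) :
  simple_tri_grid_graph M -> g \in M -> g' \in M ->
  forall (q : axis) (dq : nat), qdist q M g g' dq ->
  let Pq := fun v => v \in M /\ qdist q M g v (uphalf dq) /\ qdist q M g' v (dq./2) in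
  is_portal q M Pq /\
  (forall s : seq node, gpath (fun u => u \in M) g s g' ->
     exists2 w, w \in g :: s & Pq w).
Proof.
move=> HS Hg Hg' q dq Hdq Pq.
have [s0 [Hsz [P0 L0]]] := Hdq.1.
have Hmin := Hdq.2.
set c := uphalf dq; set f := dq./2.
have cf : (c + f = dq)%N by rewrite /c /f; lia.
set s1 := take c s0; set s2 := drop c s0.
have E0 : s0 = s1 ++ s2 by rewrite cat_take_drop.
have sz1 : size s1 = c by rewrite size_take Hsz; case: ltnP => //; lia.
have sz2 : size s2 = f by rewrite size_drop Hsz; lia.
set x := last g s1.
have P0' : ppath (portal_adj q M) g (s1 ++ s2) by rewrite -E0.
have L0' : portal q M (last g (s1 ++ s2)) g' by rewrite -E0.
have Wgx : qwalk q M g x c by rewrite -sz1; apply: qwalk_pre Hg P0'.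
have Wxg : qwalk q M x g' f by rewrite -sz2; apply: qwalk_suf P0' L0'.
have Mx : x \in M := (qwalk_M Wgx).2.
have Bk : forall w, portal q M x w -> Pq w.
  move=> w Hw; have Mw := (portal_M Hw).2.
  have Wgw : qwalk q M g w c := qwalk_portal Wgx (portal_refl q Hg) Hw.
  have Wwg : qwalk q M w g' f := qwalk_portal Wxg Hw (portal_refl q Hg').
  split=> //; split; split.
  - exact: Wgw.
  - move=> m Hm Wm; apply: (Hmin (m + f)%N); first lia.
    exact: qwalk_trans Wm Wwg.
  - exact: qwalk_sym Wwg.
  - move=> m Hm Wm; apply: (Hmin (c + m)%N); first lia.
    exact: qwalk_trans Wgw (qwalk_sym Wm).
split.
  exists x; split=> // w; split; last exact: Bk.
  move=> [Mw [Dgw Dg'w]].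
  have [t1 [szt1 [Pt1 Lt1]]] := Dgw.1.
  have [t2 [szt2 [Pt2 Lt2]]] := qwalk_sym Dg'w.1.
  have [Pt Lt] := walk_cat Pt1 Lt1 Pt2 Lt2.
  have [sg [Gs Ms]] := realize Hg Pt.
  have [sE [GE ME]] := portal_path Lt.
  have [z Hz Hxz] := hit HS Hg Hdq Hsz P0 L0 E0 (gpath_cat Gs GE).
  have [ta [tb [Et Hpt]]] : exists ta tb, t1 ++ t2 = ta ++ tb /\ portal q M (last g ta) z.
    case: (mem_cat_cons Hz) => [/Ms //|Hz2].
    exists (t1 ++ t2), [::]; rewrite cats0; split=> //; apply: ME; by rewrite inE Hz2 orbT.
  have Pab : ppath (portal_adj q M) g (ta ++ tb) by rewrite -Et.
  have Lab : portal q M (last g (ta ++ tb)) g' by rewrite -Et.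
  have Wa := qwalk_pre Hg Pab.
  have Wb := qwalk_suf Pab Lab.
  have Hxa : portal q M x (last g ta) := portal_trans Hxz (portal_sym Hpt).
  have szab : (size ta + size tb = dq)%N by rewrite -size_cat -Et size_cat szt1 szt2.
  have j1 : (c <= size ta)%N.
    case: (leqP c (size ta)) => // H; exfalso.
    apply: (Hmin (size ta + f)%N); first lia.
    exact: qwalk_trans (qwalk_portal Wa (portal_refl q Hg) (portal_sym Hxa)) Wxg.
  have j2 : (size ta <= c)%N.
    case: (leqP (size ta) c) => // H; exfalso.
    apply: (Hmin (c + size tb)%N); first lia.
    exact: qwalk_trans Wgx (qwalk_portal Wb (portal_sym Hxa) (portal_refl q Hg')).
  have Eta : ta = t1.
    have : take (size t1) (t1 ++ t2) = t1 by rewrite take_size_cat.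
    rewrite Et take_size_cat // szt1; lia.
  by apply: portal_trans Hxa _; rewrite Eta.
move=> s Gs.
have [z Hz Hxz] := hit HS Hg Hdq Hsz P0 L0 E0 Gs.
by exists z => //; apply: Bk.
Qed.
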